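(* For all integers $l\ge1$ and $n\ge1$, the colored Eulerian polynomial $A_n^{(l)}(t)=\sum_{\pi\in C_l\wr\mathfrak{S}_n}t^{\mathrm{fexc}(\pi)}$ is $t$-symmetric and log-concave; in particular it is $t$-unimodal.
   Context: $C_l\wr\mathfrak{S}_n$ is the set of words $\pi=\pi_1\cdots\pi_n$ with $\pi_i=|\pi_i|^{\epsilon_i}$, $\epsilon_i\in\{0,\dots,l-1\}$, and $|\pi_1|\cdots|\pi_n|\in\mathfrak{S}_n$. $\mathrm{exc}(\pi)$ is the number of $i$ with $\epsilon_i=0$ and $|\pi_i|>i$, and $\mathrm{fexc}(\pi)=l\cdot\mathrm{exc}(\pi)+\sum_{i=1}^n\epsilon_i$. A nonzero polynomial $\sum_{i=r}^sa_it^i$ with $a_r,a_s\ne0$ is $t$-symmetric if $a_{r+k}=a_{s-k}$ for all $0\le k\le s-r$; it is log-concave if $a_k^2\ge a_{k-1}a_{k+1}$ for $r<k<s$; it is $t$-unimodal if $a_r\le a_{r+1}\le\dots\le a_{\lfloor(r+s)/2\rfloor}$ and $a_{\lfloor(r+s+1)/2\rfloor}\ge\dots\ge a_s$. *)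

(* Defs.v *)
From mathcomp Require Import all_boot all_order all_algebra all_fingroup.
Set Implicit Arguments. Unset Strict Implicit. Unset Printing Implicit Defensive.
Import Order.TTheory GRing.Theory Num.Theory.
Local Open Scope ring_scope.

(* A colored permutation in C_l wr S_n is a pair (s, eps): the underlying
   permutation s : 'S_n (|pi_i| = s i, positions 0-based) and the colors
   eps : 'I_n -> 'I_l (epsilon_i). *)
Definition colperm (l n : nat) := ('S_n * {ffun 'I_n -> 'I_l})%type.

Definition cexc (l n : nat) (pi : colperm l n) : nat :=
  #|[pred i : 'I_n | (nat_of_ord (pi.2 i) == 0%N) && (i < pi.1 i)%N]|.

Definition fexc (l n : nat) (pi : colperm l n) : nat :=
  (l * cexc pi + \sum_(i < n) nat_of_ord (pi.2 i))%N.

Definition colEulerian (l n : nat) : {poly int} :=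
  \sum_(pi : colperm l n) 'X^(fexc pi).

Definition lowdeg (R : nzRingType) (p : {poly R}) : nat :=
  find (fun c => c != 0) (polyseq p).

Definition t_symmetric (R : nzRingType) (p : {poly R}) : Prop :=
  let r := lowdeg p in let s := (size p).-1 in
  p != 0 /\ forall k : nat, (k <= s - r)%N -> p`_(r + k) = p`_(s - k).

Definition log_concave (R : realDomainType) (p : {poly R}) : Prop :=
  let r := lowdeg p in let s := (size p).-1 in
  p != 0 /\ forall k : nat, (r < k)%N -> (k < s)%N ->
    p`_(k.-1) * p`_(k.+1) <= p`_k ^+ 2.

Definition t_unimodal (R : realDomainType) (p : {poly R}) : Prop :=
  let r := lowdeg p in let s := (size p).-1 in
  p != 0 /\
  (forall k : nat, (r <= k)%N -> (k < (r + s)./2)%N -> p`_k <= p`_k.+1) /\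
  (forall k : nat, ((r + s).+1./2 <= k)%N -> (k < s)%N -> p`_k.+1 <= p`_k).

(* Main.v *)
Require Import Defs.
From mathcomp Require Import all_boot all_order all_algebra all_fingroup.
From mathcomp Require Import zify ring lra.
Set Implicit Arguments. Unset Strict Implicit. Unset Printing Implicit Defensive.
Import Order.TTheory GRing.Theory Num.Theory.
Local Open Scope ring_scope.

Definition Good (f : int -> int) (s : nat) : Prop :=
  [/\ forall z, 0 <= f z, forall z, (0 < f z) = (0 <= z <= s%:Z) &
      forall z, f z * f (z + 2) <= f (z + 1) ^+ 2].

Lemma Good_zero f s z : Good f s -> (z < 0) || (s%:Z < z) -> f z = 0.
Proof.
case=> nn pos _ H; apply/eqP; rewrite eq_le nn andbT leNgt pos.
apply/negP=> /andP[]; case/orP: H => H *; lia.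
Qed.

Lemma Good_pos f s z : Good f s -> 0 <= z -> z <= s%:Z -> 0 < f z.
Proof. by case=> _ pos _ h1 h2; rewrite pos h1 h2. Qed.

Lemma Good_sup f s z : Good f s -> 0 < f z -> 0 <= z /\ z <= s%:Z.
Proof. by case=> _ pos _; rewrite pos => /andP[]. Qed.

Lemma Good_pf1 f s (m : nat) x : Good f s ->
  f x * f (x + m%:Z + 1) <= f (x + 1) * f (x + m%:Z).
Proof.
move=> G; have [nn _ lc] := G.
elim: m x => [|m IH] x.
  by rewrite addr0 mulrC.
have E1 : x + (m.+1)%:Z + 1 = (x + m%:Z) + 2 by lia.
have E2 : x + (m.+1)%:Z = (x + m%:Z) + 1 by lia.
rewrite E1 E2.
have [h0|hx] := eqVneq (f x) 0; first by rewrite h0 mul0r mulr_ge0.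
have [h2|hy] := eqVneq (f (x + m%:Z + 2)) 0; first by rewrite h2 mulr0 mulr_ge0.
have px : 0 < f x by rewrite lt_def hx nn.
have py : 0 < f (x + m%:Z + 2) by rewrite lt_def hy nn.
have [a1 _] := Good_sup G px; have [_ a2] := Good_sup G py.
have pm : 0 < f (x + m%:Z + 1) by apply: (Good_pos G); lia.
rewrite -(ler_pM2l pm).
have h1 := IH x; have h2 := lc (x + m%:Z).
have n1 := nn (x+1); have n2 := nn (x + m%:Z + 2).
apply: (le_trans (y := f (x + 1) * f (x + m%:Z) * f (x + m%:Z + 2))).
  by rewrite mulrCA mulrA ler_wpM2r.
rewrite -mulrA [X in _ <= X]mulrCA -expr2.
by rewrite ler_wpM2l.
Qed.

Lemma Good_pf1' f s x y : Good f s -> x <= y -> f x * f (y + 1) <= f (x + 1) * f y.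
Proof.
move=> G xy; have E : y = x + (`|y - x|%N)%:Z by rewrite gez0_abs ?subr_ge0 //; ring.
by rewrite E; apply: Good_pf1 G.
Qed.

Lemma Good_pf f s x y (d : nat) : Good f s -> x <= y ->
  f x * f (y + d%:Z) <= f (x + d%:Z) * f y.
Proof.
move=> G xy; have [nn _ lc] := G.
elim: d => [|d IH]; first by rewrite !addr0.
have E1 : y + (d.+1)%:Z = (y + d%:Z) + 1 by lia.
have E2 : x + (d.+1)%:Z = (x + d%:Z) + 1 by lia.
rewrite E1 E2.
have [h0|hx] := eqVneq (f x) 0; first by rewrite h0 mul0r mulr_ge0.
have [h2|hy] := eqVneq (f (y + d%:Z + 1)) 0; first by rewrite h2 mulr0 mulr_ge0.
have px : 0 < f x by rewrite lt_def hx nn.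
have py : 0 < f (y + d%:Z + 1) by rewrite lt_def hy nn.
have [a1 _] := Good_sup G px; have [_ a2] := Good_sup G py.
have pm : 0 < f (y + d%:Z) by apply: (Good_pos G); lia.
rewrite -(ler_pM2l pm).
have h1 : f x * f (y + d%:Z) * f (y + d%:Z + 1) <= f (x + d%:Z) * f y * f (y + d%:Z + 1).
  by rewrite ler_wpM2r.
have h2 : f (x + d%:Z) * f (y + d%:Z + 1) <= f (x + d%:Z + 1) * f (y + d%:Z).
  by apply: (Good_pf1' G); lia.
apply: (le_trans (y := f y * (f (x + d%:Z) * f (y + d%:Z + 1)))).
  have e1 : f (y + d%:Z) * (f x * f (y + d%:Z + 1)) = f x * f (y + d%:Z) * f (y + d%:Z + 1) by ring.
  have e2 : f y * (f (x + d%:Z) * f (y + d%:Z + 1)) = f (x + d%:Z) * f y * f (y + d%:Z + 1) by ring.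
  by rewrite e1 e2.
apply: (le_trans (y := f y * (f (x + d%:Z + 1) * f (y + d%:Z)))).
  by rewrite ler_wpM2l.
rewrite [X in _ <= X](_ : _ = f y * (f (x + d%:Z + 1) * f (y + d%:Z))) //; ring.
Qed.

Definition conv (f g : int -> int) (N : nat) (z : int) : int :=
  \sum_(j < N) f j%:Z * g (z - j%:Z).

Section Conv.
Variables (f g : int -> int) (s t : nat).
Hypotheses (Gf : Good f s) (Gg : Good g t).
Let N := s.+2.
Let h := conv f g N.

Lemma h_shift z w : w = z + 1 -> h z = \sum_(j < N) f (j%:Z - 1) * g (w - j%:Z).
Proof.
move=> ->; rewrite /h /conv /N [RHS]big_ord_recl [LHS]big_ord_recr /=.
rewrite (Good_zero Gf (z := s.+1%:Z)) ?mul0r ?addr0; last by apply/orP; right; lia.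
rewrite (Good_zero Gf (z := 0%Z - 1)) ?mul0r ?add0r; last by apply/orP; left; lia.
apply: eq_bigr => i _; congr (f _ * g _); rewrite /bump /=; lia.
Qed.

Definition Mf (p q : int) := f p * f (q - 1) - f (p - 1) * f q.
Definition Hg z (p q : int) := g (z + 1 - p) * g (z + 2 - q).

Lemma term_ge0 z (p q : nat) : (p <= q)%N -> 0 <= Mf p q * (Hg z p q - Hg z q p).
Proof.
move=> pq; apply: mulr_ge0.
  rewrite /Mf subr_ge0.
  have := Good_pf 1 Gf (x := p%:Z - 1) (y := q%:Z - 1).
  by rewrite !subrK => H; apply: H; lia.
rewrite /Hg subr_ge0.
have := Good_pf (q - p) Gg (x := z + 1 - q%:Z) (y := z + 2 - q%:Z).
have e1 : z + 2 - q%:Z + (q - p)%N%:Z = z + 2 - p%:Z by lia.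
have e2 : z + 1 - q%:Z + (q - p)%N%:Z = z + 1 - p%:Z by lia.
by rewrite e1 e2 => H; apply: H; lia.
Qed.

Lemma conv_lc z : h z * h (z + 2) <= h (z + 1) ^+ 2.
Proof.
set D := h (z + 1) ^+ 2 - h z * h (z + 2).
suff : 0 <= D by rewrite subr_ge0.
have ED : D = \sum_(p < N) \sum_(q < N) Mf p q * Hg z p q.
  rewrite /D expr2 {2}(h_shift (z := z + 1) (w := z + 2)); last by ring.
  rewrite (h_shift (z := z) (w := z + 1)) //.
  rewrite /h /conv !big_distrlr -sumrB; apply: eq_bigr => p _.
  rewrite -sumrB; apply: eq_bigr => q _.
  by rewrite /Mf /Hg /=; ring.
have ET : D + D = \sum_(p < N) \sum_(q < N) (Mf p q * Hg z p q + Mf q p * Hg z q p).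
  rewrite ED [X in _ + X]exchange_big /= -big_split /=; apply: eq_bigr => p _.
  by rewrite -big_split.
have : 0 <= D + D.
  rewrite ET; apply: sumr_ge0 => p _; apply: sumr_ge0 => q _.
  case: (leqP p q) => pq.
    have := term_ge0 z pq.
    by rewrite (_ : Mf p q * Hg z p q + Mf q p * Hg z q p = Mf p q * (Hg z p q - Hg z q p)) // /Mf; ring.
  have := term_ge0 z (ltnW pq).
  by rewrite (_ : Mf p q * Hg z p q + Mf q p * Hg z q p = Mf q p * (Hg z q p - Hg z p q)) // /Mf; ring.
lia.
Qed.


Lemma conv_N z k : conv f g (s.+1 + k) z = conv f g s.+1 z.
Proof.
elim: k => [|k IH]; first by rewrite addn0.
rewrite addnS /conv big_ord_recr /= (Good_zero Gf (z := (s.+1 + k)%N%:Z)) ?mul0r ?addr0 //.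
by apply/orP; right; lia.
Qed.

Lemma Good_conv : Good h (s + t).
Proof.
have [nnf posf lcf] := Gf; have [nng posg lcg] := Gg.
have nn : forall z, 0 <= h z.
  by move=> z; apply: sumr_ge0 => j _; apply: mulr_ge0.
split => // [z|]; last exact: conv_lc.
case: (boolP (0 <= z <= (s + t)%N%:Z)) => Hz.
  have [k Ek] : exists k : nat, z = k%:Z by exists `|z|%N; rewrite gez0_abs //; lia.
  subst z.
  set j0 := minn k s.
  have j0N : (j0 < N)%N by rewrite /j0 /N; lia.
  apply/idP.
  rewrite /h /conv (bigD1 (Ordinal j0N)) //= ltr_wpDr //.
    by apply: sumr_ge0 => j _; apply: mulr_ge0.
  apply: mulr_gt0; first by apply: (Good_pos Gf); lia.
  by apply: (Good_pos Gg); lia.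
suff -> : h z = 0 by rewrite ltxx.
rewrite /h /conv big1 // => j _.
have [hj|hj] := leqP j s.
  rewrite (Good_zero Gg (z := z - j%:Z)) ?mulr0 //; lia.
by rewrite (Good_zero Gf (z := j%:Z)) ?mul0r //; apply/orP; right; lia.
Qed.
End Conv.

Definition Symm (f : int -> int) (s : nat) := forall z, f z = f (s%:Z - z).

Lemma Symm_conv f g s t : Symm f s -> Symm g t -> Symm (conv f g s.+1) (s + t).
Proof.
move=> Sf Sg z; rewrite /conv (reindex_inj rev_ord_inj) /=.
apply: eq_bigr => j _.
rewrite Sf Sg; congr (f _ * g _).
  have := ltn_ord j; lia.
have := ltn_ord j; lia.
Qed.

Definition cf (p : {poly int}) (z : int) : int :=
  match z with Posz k => p`_k | Negz _ => 0 end.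

Lemma cf_nat (p : {poly int}) (k : nat) : cf p k = p`_k. Proof. by []. Qed.

Lemma cf_neg (p : {poly int}) z : z < 0 -> cf p z = 0.
Proof. by case: z. Qed.

Lemma cf_mul (p q : {poly int}) N z : (size p <= N)%N -> cf (p * q) z = conv (cf p) (cf q) N z.
Proof.
move=> sp; rewrite /conv.
case: z => [m|m] /=; last first.
  by rewrite big1 // => j _; rewrite cf_neg ?mulr0 // NegzE; lia.
rewrite coefM.
have -> : \sum_(j < N) cf p j * cf q (m%:Z - j%:Z) =
          \sum_(j < m.+1 + N) cf p j * cf q (m%:Z - j%:Z).
  rewrite (big_ord_widen _ (fun j : nat => cf p j * cf q (m%:Z - j%:Z)) (leq_addl m.+1 N)).
  rewrite big_mkcond /=; apply: eq_bigr => j _.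
  case: ifP => // /negbT; rewrite -leqNgt => jN.
  by rewrite (leq_sizeP _ _ sp) ?mul0r.
rewrite (big_ord_widen _ (fun j : nat => p`_j * q`_(m - j)) (leq_addr N m.+1)).
rewrite big_mkcond /=; apply: eq_bigr => j _.
case: ifP => jm.
  by rewrite (_ : m%:Z - j%:Z = (m - j)%N%:Z) //; lia.
by rewrite cf_neg ?mulr0 //; lia.
Qed.

Section Rec.
Variables (f : int -> int) (n : nat).
Hypotheses (Gf : Good f n) (Sf : Symm f n).
Definition frec (z : int) : int := (z + 1) * f z + (n.+2%:Z - z) * f (z - 1).

Lemma frec_zero z : (z < 0) || (n.+1%:Z < z) -> frec z = 0.
Proof.
move=> H; rewrite /frec (Good_zero Gf (z := z)) ?(Good_zero Gf (z := z - 1)) ?mulr0 ?addr0 //;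
  move: H; lia.
Qed.

Lemma Good_frec : Good frec n.+1.
Proof.
have [nnf posf lcf] := Gf.
have nn : forall z, 0 <= frec z.
  move=> z; case: (boolP ((z < 0) || (n.+1%:Z < z))) => H; first by rewrite frec_zero.
  rewrite /frec addr_ge0 // mulr_ge0 //; move: H; lia.
split => // [z|z].
  case: (boolP (0 <= z <= n.+1%:Z)) => Hz; last first.
    by rewrite frec_zero ?ltxx //; move: Hz; lia.
  apply/idP.
  have [hz|hz] := leP z n%:Z.
    rewrite /frec ltr_wpDr ?mulr_ge0 //; first by move: Hz; lia.
    by apply: mulr_gt0; [lia | apply: (Good_pos Gf); lia].
  rewrite /frec ltr_wpDl ?mulr_ge0 //; first by lia.
  by apply: mulr_gt0; [lia | apply: (Good_pos Gf); lia].
case: (boolP ((z + 1 < 0) || (n.+1%:Z < z + 1))) => H.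
  case/orP: H => H.
    by rewrite frec_zero ?mul0r ?sqr_ge0 //; apply/orP; left; lia.
  by rewrite (frec_zero (z := z + 2)) ?mulr0 ?sqr_ge0 //; apply/orP; right; lia.
have h1 : f (z - 1) * f (z + 1) <= f z ^+ 2.
  by have := lcf (z - 1); rewrite (_ : z - 1 + 2 = z + 1) ?subrK //; ring.
have h2 := lcf z.
have h3 : f (z - 1) * f (z + 2) <= f z * f (z + 1).
  have := Good_pf 1 Gf (x := z - 1) (y := z + 1); rewrite subrK.
  by rewrite (_ : z + 1 + 1%:Z = z + 2) ?addrA // => -> //; lia.
rewrite /frec (_ : z + 2 - 1 = z + 1); last by ring.
rewrite (_ : z + 1 - 1 = z); last by ring.
rewrite -subr_ge0.
set x := f (z - 1); set y := f z; set u := f (z + 1); set w := f (z + 2).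
rewrite (_ : ((z + 1 + 1) * u + (n.+2%:Z - (z + 1)) * y) ^+ 2 -
   ((z + 1) * y + (n.+2%:Z - z) * x) * ((z + 2 + 1) * w + (n.+2%:Z - (z + 2)) * u) =
   (n.+2%:Z - z) * (n%:Z - z) * (y ^+ 2 - x * u) + (z + 1) * (z + 3) * (u ^+ 2 - y * w)
   + (n.+2%:Z - z) * (z + 3) * (y * u - x * w) + (y - u) ^+ 2); last first.
  rewrite (_ : n.+2%:Z = n%:Z + 2); last by lia.
  ring.
rewrite !addr_ge0 ?sqr_ge0 // mulr_ge0 ?subr_ge0 //; try (apply: mulr_ge0); move: H; lia.
Qed.

Lemma Symm_frec : Symm frec n.+1.
Proof.
move=> z.
have e1 : f (n.+1%:Z - z) = f (z - 1) by rewrite Sf; congr f; lia.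
have e2 : f (n.+1%:Z - z - 1) = f z by rewrite Sf; congr f; lia.
rewrite /frec e1 e2.
have -> : n.+2%:Z = n%:Z + 2 by lia.
have -> : n.+1%:Z = n%:Z + 1 by lia.
ring.
Qed.
End Rec.

Definition exc n (s : 'S_n) : nat := #|[pred i : 'I_n | (i < s i)%N]|.
Definition Eul n : {poly int} := \sum_(s : 'S_n) 'X^(exc s).

Lemma exc_sum n (s : 'S_n) : exc s = (\sum_(i < n) (i < s i)%N)%N.
Proof.
rewrite /exc -sum1_card big_mkcond /=; apply: eq_bigr => i _.
by rewrite inE; case: ifP.
Qed.

Lemma exc_le n (s : 'S_n) : (exc s <= n)%N.
Proof. by rewrite /exc (leq_trans (max_card _)) // card_ord. Qed.

Definition Hm n (p : 'I_n.+1 * 'S_n) : 'S_n.+1 :=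
  (tperm p.1 ord_max * lift_perm ord_max ord_max p.2)%g.

Lemma Hm_j n (p : 'I_n.+1 * 'S_n) : Hm p p.1 = ord_max.
Proof. by rewrite /Hm permM tpermL lift_perm_id. Qed.

Lemma Hm_inj n : injective (@Hm n).
Proof.
move=> [j s] [j' s'] E.
have ej : j = j'.
  apply: (perm_inj (s := Hm (j', s'))); rewrite -{1}E.
  exact: (etrans (Hm_j (j, s)) (esym (Hm_j (j', s')))).
subst j'; congr (_, _).
move: E; rewrite /Hm /= => /mulgI E.
apply/permP => k; apply: (@lift_inj _ ord_max).
by rewrite -!(lift_perm_lift ord_max ord_max) E.
Qed.

Lemma Hm_bij n : bijective (@Hm n).
Proof.
apply: inj_card_bij; first exact: Hm_inj.
by rewrite card_prod card_ord !card_Sn factS.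
Qed.

Lemma widen_lift n (x : 'I_n) : widen_ord (leqnSn n) x = lift ord_max x.
Proof. by apply: val_inj; rewrite /= /bump leqNgt ltn_ord. Qed.

Lemma exc_split n (p : 'S_n.+1) :
  exc p = (\sum_(x < n) (x < p (lift ord_max x)))%N.
Proof.
rewrite exc_sum big_ord_recr /= ltnNge -ltnS ltn_ord addn0.
by apply: eq_bigr => x _; rewrite widen_lift.
Qed.

Lemma exc_Hm_max n (s : 'S_n) : exc (Hm (ord_max, s)) = exc s.
Proof.
rewrite exc_split exc_sum; apply: eq_bigr => x _.
by rewrite /Hm /= tperm1 mul1g lift_perm_lift lift_max.
Qed.

Lemma exc_Hm_w n (j : 'I_n) (s : 'S_n) :
  (exc (Hm (widen_ord (leqnSn n) j, s)) + (j < s j))%N = (exc s).+1.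
Proof.
rewrite exc_split exc_sum (bigD1 j) //= [in RHS](bigD1 j) //=.
have -> : (\sum_(i < n | i != j) (i < Hm (widen_ord (leqnSn n) j, s) (lift ord_max i)))%N
     = (\sum_(i < n | i != j) (i < s i))%N.
  apply: eq_bigr => x xj.
  rewrite /Hm permM /= tpermD; [by rewrite lift_perm_lift lift_max| |exact: neq_lift].
  by rewrite widen_lift (inj_eq (@lift_inj _ _)) eq_sym.
rewrite /Hm permM /= widen_lift tpermL lift_perm_id /=.
rewrite ltn_ord; move: (\sum_(i < n | i != j) (i < s i))%N => a.
by case: (j < s j)%N => /=; lia.
Qed.

Lemma sum_negb n (b : 'I_n -> bool) :
  (\sum_(j < n) ~~ b j)%N = (n - \sum_(j < n) b j)%N.
Proof.
have : (\sum_(j < n) (b j + ~~ b j))%N = n.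
  by rewrite (eq_bigr (fun _ => 1%N)) ?sum1_card ?card_ord // => j _; case: (b j).
rewrite big_split /=; lia.
Qed.

Lemma Eul_S n : Eul n.+1 =
  \sum_(s : 'S_n) ('X^(exc s) *+ (exc s).+1 + 'X^((exc s).+1) *+ (n - exc s)).
Proof.
rewrite /Eul (reindex (@Hm n)) /=; last exact: onW_bij (Hm_bij n).
have -> : \sum_(p : 'I_n.+1 * 'S_n) ('X^(exc (Hm p)) : {poly int}) =
   \sum_(j : 'I_n.+1) \sum_(s : 'S_n) 'X^(exc (Hm (j, s))).
  by rewrite pair_bigA; apply: eq_bigr => [[]].
rewrite exchange_big /=; apply: eq_bigr => s _.
rewrite big_ord_recr /= exc_Hm_max.
have -> : \sum_(j < n) ('X^(exc (Hm (widen_ord (leqnSn n) j, s))) : {poly int}) =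
   \sum_(j < n) ('X^(exc s) *+ (j < s j)%N + 'X^((exc s).+1) *+ ~~ (j < s j)%N).
  apply: eq_bigr => j _; have := exc_Hm_w j s.
  case: (j < s j)%N => /= E.
    by rewrite addn1 in E; case: E => ->; rewrite addr0.
  by rewrite addn0 in E; rewrite E add0r.
rewrite big_split /= !sumrMnr sum_negb -exc_sum.
by rewrite mulrSr addrAC.
Qed.

Lemma coef_Eul n (k : nat) : (Eul n)`_k = \sum_(s : 'S_n) ((k == exc s)%:R : int).
Proof. by rewrite /Eul coef_sum; apply: eq_bigr => s _; rewrite coefXn. Qed.

Lemma cf_Eul_pred n (k : nat) :
  cf (Eul n) (k%:Z - 1) = \sum_(s : 'S_n) ((k == (exc s).+1)%:R : int).
Proof.
case: k => [|k].
  by rewrite cf_neg // big1.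
rewrite (_ : k.+1%:Z - 1 = k%:Z); last by lia.
by rewrite cf_nat coef_Eul.
Qed.

Lemma cf_Eul_S n z :
  cf (Eul n.+1) z = (z + 1) * cf (Eul n) z + (n.+1%:Z - z) * cf (Eul n) (z - 1).
Proof.
case: z => [k|k]; last first.
  by rewrite !cf_neg ?mulr0 ?addr0 // NegzE; lia.
rewrite cf_Eul_pred !cf_nat Eul_S coef_sum coef_Eul.
rewrite !mulr_sumr -big_split /=; apply: eq_bigr => s _.
rewrite coefD !coefMn !coefXn.
have := exc_le s.
case: (eqVneq k (exc s)) => [->|ke].
  by rewrite (_ : (exc s == (exc s).+1) = false) ?mulr0n ?mulr0 ?addr0 ?mulr1 ?mulr1n; [move=> _; lia | lia].
case: (eqVneq k (exc s).+1) => [->|ke2] /= le.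
  by rewrite mul0rn add0r mulr0 add0r mulr1; lia.
by rewrite !mul0rn !mulr0 !addr0.
Qed.

Definition Qp (l : nat) : {poly int} := \poly_(i < l) 1.

Lemma Qp_sum l : Qp l = \sum_(i < l) 'X^i.
Proof. by rewrite /Qp poly_def; apply: eq_bigr => i _; rewrite scale1r. Qed.

Lemma prodX (I : finType) (w : I -> nat) :
  \prod_(i : I) ('X^(w i) : {poly int}) = 'X^(\sum_(i : I) w i).
Proof.
by rewrite (big_morph (fun k => ('X^k : {poly int})) (fun a b => exprD 'X a b) (expr0 'X)).
Qed.

Lemma sumQ l (b : bool) : (0 < l)%N ->
  \sum_(c < l) ('X^(l * ((c == 0 :> nat) && b) + c) : {poly int}) = Qp l * 'X^b.
Proof.
case: l => // l _; rewrite Qp_sum.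
case: b => /=.
  rewrite big_ord_recl /= muln1 addn0 mulr_suml big_ord_recr /=.
  rewrite -exprSr addrC; congr (_ + _); apply: eq_bigr => i _.
  by rewrite /bump /= muln0 add0n add1n -exprSr.
rewrite mulr1; apply: eq_bigr => i _; by rewrite andbF muln0.
Qed.

Lemma cexc_sum l n (s : 'S_n) (e : {ffun 'I_n -> 'I_l}) :
  cexc (s, e) = (\sum_(i < n) ((e i == 0 :> nat) && (i < s i)%N))%N.
Proof.
rewrite /cexc -sum1_card big_mkcond /=; apply: eq_bigr => i _.
by rewrite inE; case: ifP.
Qed.

Lemma colEulerian_fact l n : (0 < l)%N -> colEulerian l n = Qp l ^+ n * Eul n.
Proof.
move=> l0.
have -> : colEulerian l n = \sum_(s : 'S_n) \sum_(e : {ffun 'I_n -> 'I_l}) 'X^(fexc (s, e)).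
  by rewrite /colEulerian pair_bigA; apply: eq_bigr => [[]].
rewrite /Eul mulr_sumr; apply: eq_bigr => s _.
have -> : \sum_(e : {ffun 'I_n -> 'I_l}) ('X^(fexc (s, e)) : {poly int}) =
  \sum_(e : {ffun 'I_n -> 'I_l}) \prod_(i < n) 'X^(l * ((e i == 0 :> nat) && (i < s i)%N) + e i).
  apply: eq_bigr => e _; rewrite prodX /fexc cexc_sum big_split /=.
  by rewrite big_distrr.
rewrite -(bigA_distr_bigA (fun (i : 'I_n) (c : 'I_l) => ('X^(l * ((c == 0 :> nat) && (i < s i)%N) + c) : {poly int}))).
rewrite (eq_bigr (fun i : 'I_n => Qp l * 'X^(i < s i)%N)); last by move=> i _; rewrite sumQ.
by rewrite big_split /= prodr_const card_ord prodX -exc_sum.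
Qed.

Lemma Good_ext f g s : (forall z, f z = g z) -> Good f s -> Good g s.
Proof.
by move=> E [h1 h2 h3]; split => z; rewrite -!E.
Qed.

Lemma Symm_ext f g s : (forall z, f z = g z) -> Symm f s -> Symm g s.
Proof. by move=> E S z; rewrite -!E. Qed.

Lemma size_Good (p : {poly int}) s : Good (cf p) s -> (size p <= s.+1)%N.
Proof.
move=> G; apply/leq_sizeP => j js.
by rewrite -cf_nat (Good_zero G) //; apply/orP; right; lia.
Qed.

Lemma Good_mul (p q : {poly int}) s t :
  Good (cf p) s -> Good (cf q) t -> Good (cf (p * q)) (s + t).
Proof.
move=> Gp Gq; apply: (Good_ext _ (Good_conv Gp Gq)) => z.
by rewrite (cf_mul _ _ (N := s.+2)) // (leq_trans (size_Good Gp)).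
Qed.

Lemma Symm_mul (p q : {poly int}) s t :
  Good (cf p) s -> Symm (cf p) s -> Symm (cf q) t -> Symm (cf (p * q)) (s + t).
Proof.
move=> Gp Sp Sq; apply: (Symm_ext _ (Symm_conv Sp Sq)) => z.
by rewrite (cf_mul _ _ (N := s.+1)) // (size_Good Gp).
Qed.

Lemma cf1 z : cf 1 z = if z == 0 then 1 else 0.
Proof. by case: z => [[|k]|k] //=; rewrite coef1. Qed.

Lemma Good_one : Good (cf 1) 0 /\ Symm (cf 1) 0.
Proof.
split; last by move=> z; rewrite !cf1; case: ifP; case: ifP => //; lia.
split => z; rewrite ?cf1.
- by case: ifP.
- by case: ifP => /eqP; lia.
case: ifP => /eqP h; case: ifP => /eqP h'; case: ifP => /eqP h''; lia.
Qed.

Lemma cfQ l z : cf (Qp l) z = if (0 <= z) && (z < l%:Z) then 1 else 0.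
Proof.
case: z => [k|k] /=; last by [].
by rewrite /Qp coef_poly; case: ifP => /= h; rewrite ?h //; case: ifP => //; lia.
Qed.

Lemma Good_Q l : Good (cf (Qp l.+1)) l /\ Symm (cf (Qp l.+1)) l.
Proof.
split; last by move=> z; rewrite !cfQ; case: ifP => h; case: ifP => h' //; lia.
split => z; rewrite ?cfQ.
- by case: ifP.
- by case: ifP => h; lia.
case: ifP => h; case: ifP => h'; case: ifP => h''; lia.
Qed.

Lemma Good_Qpow l m : Good (cf (Qp l.+1 ^+ m)) (m * l) /\ Symm (cf (Qp l.+1 ^+ m)) (m * l).
Proof.
elim: m => [|m [IH1 IH2]]; first by rewrite expr0 mul0n; exact: Good_one.
have [G S] := Good_Q l.
rewrite exprSr mulSnr; split; [exact: Good_mul | exact: Symm_mul].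
Qed.

Lemma Eul0 : Eul 0 = 1.
Proof.
rewrite /Eul (eq_bigr (fun _ => 1)) ?sumr_const ?card_Sn //.
move=> s _; rewrite (_ : exc s = 0%N) //; have := exc_le s; lia.
Qed.

Lemma Good_Eul m : Good (cf (Eul m.+1)) m /\ Symm (cf (Eul m.+1)) m.
Proof.
elim: m => [|m [IH1 IH2]].
  have E : forall z, cf 1 z = cf (Eul 1) z.
    move=> z; rewrite cf_Eul_S Eul0 !cf1.
    case: (eqVneq z 0) => [->|h] //=; case: ifP => /eqP h2; lia.
  have [G S] := Good_one; split; [exact: Good_ext E G | exact: Symm_ext E S].
have E : forall z, frec (cf (Eul m.+1)) m z = cf (Eul m.+2) z.
  by move=> z; rewrite cf_Eul_S /frec.
split; [exact: Good_ext E (Good_frec IH1) | exact: Symm_ext E (Symm_frec IH2)].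
Qed.

Section Final.
Variables (p : {poly int}) (S : nat).
Hypotheses (G : Good (cf p) S) (Sy : Symm (cf p) S).

Let a (k : nat) := p`_k.

Lemma a_pos k : (k <= S)%N -> 0 < a k.
Proof. by move=> h; rewrite /a -cf_nat; apply: (Good_pos G); lia. Qed.

Lemma a_lc k : a k * a k.+2 <= a k.+1 ^+ 2.
Proof.
have [_ _ lc] := G; have := lc k.
have -> : k%:Z + 2 = k.+2%:Z by lia.
have -> : k%:Z + 1 = k.+1%:Z by lia.
by [].
Qed.

Lemma a_sym k : (k <= S)%N -> a k = a (S - k).
Proof.
move=> h; rewrite /a -!cf_nat Sy; congr cf.
lia.
Qed.

Lemma a_dec_step j : (j.+2 <= S)%N -> a j.+1 < a j -> a j.+2 < a j.+1.
Proof.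
move=> h1 h2.
have p0 := a_pos (k := j) (ltnW (ltnW h1)).
have p1 := a_pos (k := j.+1) (ltnW h1).
rewrite ltNge; apply/negP => h3.
have e1 : a j.+1 * a j.+1 < a j * a j.+1 by rewrite ltr_pM2r.
have e2 : a j * a j.+1 <= a j * a j.+2 by rewrite ler_pM2l.
have e3 := a_lc j; rewrite expr2 in e3.
by have := lt_le_trans e1 (le_trans e2 e3); rewrite ltxx.
Qed.

Lemma a_inc k : (k.*2.+2 <= S)%N -> a k <= a k.+1.
Proof.
move=> hk; rewrite leNgt; apply/negP => hlt.
have chain : forall m, (k + m.+1 <= S)%N -> a (k + m.+1) < a (k + m).
  elim => [|m IH] hm; first by rewrite addn1 addn0.
  rewrite !addnS; apply: a_dec_step; first by lia.
  rewrite -addnS; apply: IH; lia.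
have chain2 : forall m, (k + m.+1 <= S)%N -> a (k + m.+1) < a k.
  elim => [|m IH] hm; first by have := chain 0%N hm; rewrite addn0.
  by apply: (lt_trans (chain m.+1 hm)); apply: IH; lia.
have hh : (k + (S - k - k).-1.+1 <= S)%N by lia.
have := chain2 _ hh.
have -> : (k + (S - k - k).-1.+1 = S - k)%N by lia.
rewrite -a_sym; first by rewrite ltxx.
lia.
Qed.

Lemma final_props : t_symmetric p /\ log_concave p /\ t_unimodal p.
Proof.
have p0 : p`_0 != 0.
  have := a_pos (leq0n S); rewrite /a lt0r => /andP[h _]; exact: h.
have pn0 : p != 0 by apply: contraNneq p0 => ->; rewrite coef0.
have lw : lowdeg p = 0%N.
  rewrite /lowdeg; move: p0.
  case: (polyseq p) => [|c r] /= //.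
  by move=> ->.
have sz : (size p).-1 = S.
  have h1 := size_Good G.
  have h2 : p`_S != 0.
    have := a_pos (leqnn S); rewrite /a lt0r => /andP[h _]; exact: h.
  have h3 : (S < size p)%N.
    rewrite ltnNge; apply/negP => h; move: h2; rewrite nth_default ?eqxx //.
  lia.
rewrite /t_symmetric /log_concave /t_unimodal lw sz.
split; first split; first exact: pn0.
  move=> k hk; rewrite add0n; apply: (a_sym (k := k)); lia.
split; first split; first exact: pn0.
  move=> k h1 h2; have := a_lc k.-1.
  have -> : (k.-1.+2 = k.+1)%N by lia.
  have -> : (k.-1.+1 = k)%N by lia.
  by [].
split; first exact: pn0.
split.
  move=> k _ h2; apply: a_inc.
  move: h2; rewrite add0n geq_half_double -!addnn; lia.
move=> k h1 h2.
have e1 : (p`_k.+1 = p`_(S - k.+1)) by apply: (a_sym (k := k.+1)); lia.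
have e2 : (p`_k = p`_(S - k.+1).+1).
  have -> : ((S - k.+1).+1 = S - k)%N by lia.
  by apply: (a_sym (k := k)); lia.
rewrite e1 e2; apply: a_inc.
move: h1; rewrite add0n leq_half_double -!addnn; lia.
Qed.
End Final.

Theorem proposition4p8 (l n : nat) :
  (1 <= l)%N -> (1 <= n)%N ->
  t_symmetric (colEulerian l n) /\ log_concave (colEulerian l n) /\
  t_unimodal (colEulerian l n).
Proof.
case: l => // l; case: n => // n _ _.
rewrite colEulerian_fact //.
have [G1 S1] := Good_Qpow l n.+1.
have [G2 S2] := Good_Eul n.
apply: (final_props (S := (n.+1 * l + n)%N)); [exact: Good_mul | exact: Symm_mul].
Qed.
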